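(* Let $(E,d_E)$ be a complete metric space and let $(A_n)_{n\ge 1}$ be a sequence of compact fuzzy sets in $E$. 1. Suppose that for every $\alpha\in(0,1]$ and every $n$ we have $A_{n+1}^\alpha\subseteq A_n^\alpha$. Then there is a compact fuzzy set $A$ in $E$ with $A^\alpha=\bigcap_{n\ge1}A_n^\alpha$ for every $\alpha\in(0,1]$, and $A_n\to A$ levelwise. 2. Under the hypothesis of item 1, for every $x\in E$ we have $A_n(x)\to A(x)$, where $A$ is the compact fuzzy set of item 1. 3. If for every $x\in E$ the sequence $(A_n(x))_{n\ge1}$ is non-increasing and converges to $A(x)$, where $A$ is a compact fuzzy set in $E$, then $A_n\to A$ levelwise.
   Context: A (normalized) fuzzy set in a set $\Omega$ is a function $A:\Omega\to[0,1]$ such that $A(x_0)=1$ for some $x_0\in\Omega$. For $\alpha\in(0,1]$ its $\alpha$-cut is $A^\alpha=\{x\in\Omega: A(x)\ge\alpha\}$. A compact fuzzy set in a topological space $E$ is a fuzzy set in $E$ all of whose $\alpha$-cuts, $\alpha\in(0,1]$, are nonempty and compact. $\mathcal K(E)$ denotes the set of nonempty compact subsets of a metric space $(E,d_E)$ with the Hausdorff metric $d_{\mathcal K(E)}(K,L)=\max\big(\sup_{x\in K}\inf_{y\in L}d_E(x,y),\ \sup_{x\in L}\inf_{y\in K}d_E(x,y)\big)$. A sequence $(A_n)$ of compact fuzzy sets converges levelwise to a compact fuzzy set $A$ if for every $\alpha\in(0,1]$, $A_n^\alpha\to A^\alpha$ in $(\mathcal K(E),d_{\mathcal K(E)})$.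 *)

(* Defs.v *)
From Stdlib Require Import Reals List.
Open Scope R_scope.

Section MetricDefs.
Variable E : Type.
Variable d : E -> E -> R.

Definition is_metric : Prop :=
  (forall x y, 0 <= d x y) /\
  (forall x y, d x y = 0 <-> x = y) /\
  (forall x y, d x y = d y x) /\
  (forall x y z, d x z <= d x y + d y z).

Definition seq_converges (u : nat -> E) (l : E) : Prop :=
  forall eps, 0 < eps -> exists N, forall n, (N <= n)%nat -> d (u n) l < eps.

Definition cauchy_seq (u : nat -> E) : Prop :=
  forall eps, 0 < eps -> exists N, forall m n, (N <= m)%nat -> (N <= n)%nat ->
    d (u m) (u n) < eps.

Definition complete : Prop :=
  forall u, cauchy_seq u -> exists l, seq_converges u l.

Definition open_set (U : E -> Prop) : Prop :=
  forall x, U x -> exists r, 0 < r /\ forall y, d x y < r -> U y.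

Definition compact_set (K : E -> Prop) : Prop :=
  forall (I : Type) (U : I -> E -> Prop),
    (forall i, open_set (U i)) ->
    (forall x, K x -> exists i, U i x) ->
    exists l : list I, forall x, K x -> exists i, In i l /\ U i x.

Definition nonempty (K : E -> Prop) : Prop := exists x, K x.

(* t is the infimum of { d x y | y in L } *)
Definition is_dist_to_set (x : E) (L : E -> Prop) (t : R) : Prop :=
  is_lub (fun u => exists y, L y /\ u = - d x y) (- t).

Definition excess (K L : E -> Prop) (s : R) : Prop :=
  is_lub (fun t => exists x, K x /\ is_dist_to_set x L t) s.

Definition hausdorff_dist (K L : E -> Prop) (h : R) : Prop :=
  exists s1 s2, excess K L s1 /\ excess L K s2 /\ h = Rmax s1 s2.

Definition hausdorff_converges (Kn : nat -> E -> Prop) (K : E -> Prop) : Prop :=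
  forall eps, 0 < eps -> exists N, forall n, (N <= n)%nat ->
    exists h, hausdorff_dist (Kn n) K h /\ h < eps.

Definition fuzzy_set (A : E -> R) : Prop :=
  (forall x, 0 <= A x <= 1) /\ exists x0, A x0 = 1.

Definition alpha_cut (A : E -> R) (alpha : R) : E -> Prop :=
  fun x => A x >= alpha.

Definition compact_fuzzy_set (A : E -> R) : Prop :=
  fuzzy_set A /\
  forall alpha, 0 < alpha <= 1 ->
    nonempty (alpha_cut A alpha) /\ compact_set (alpha_cut A alpha).

Definition levelwise_converges (An : nat -> E -> R) (A : E -> R) : Prop :=
  forall alpha, 0 < alpha <= 1 ->
    hausdorff_converges (fun n => alpha_cut (An n) alpha) (alpha_cut A alpha).

End MetricDefs.

Arguments is_metric {E}. Arguments complete {E}. Arguments compact_fuzzy_set {E}.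
Arguments alpha_cut {E}. Arguments levelwise_converges {E}. Arguments seq_converges {E}.
Arguments cauchy_seq {E}. Arguments open_set {E}. Arguments compact_set {E}.
Arguments nonempty {E}. Arguments is_dist_to_set {E}. Arguments excess {E}.
Arguments hausdorff_dist {E}. Arguments hausdorff_converges {E}. Arguments fuzzy_set {E}.

(* Main.v *)
From Pilot Require Import Defs.
From Stdlib Require Import Reals List Lra Lia Classical.
Import Pilot.Defs.
Open Scope R_scope.

Section H.
Variable E : Type.
Variable d : E -> E -> R.
Hypothesis Hpos : forall x y, 0 <= d x y.

Lemma dist_exists x L : nonempty L -> exists t, is_dist_to_set d x L t.
Proof.
  intros [y0 Hy0].
  destruct (completeness (fun u => exists y, L y /\ u = - d x y)) as [m Hm].
  - exists 0. intros u [y [_ ->]]. specialize (Hpos x y). lra.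
  - exists (- d x y0); eauto.
  - exists (- m). unfold is_dist_to_set. rewrite Ropp_involutive. exact Hm.
Qed.

Lemma dist_le x L t y : is_dist_to_set d x L t -> L y -> t <= d x y.
Proof.
  intros [H1 _] Hy. assert (- d x y <= - t) by (apply H1; eauto). lra.
Qed.

Lemma excess_le K L r : nonempty K -> nonempty L ->
  (forall x, K x -> exists y, L y /\ d x y <= r) ->
  exists s, excess d K L s /\ s <= r.
Proof.
  intros [x0 Hx0] HL Hr.
  destruct (completeness (fun t => exists x, K x /\ is_dist_to_set d x L t)) as [s Hs].
  - exists r. intros t [x [Kx Ht]]. destruct (Hr x Kx) as [y [Ly Hy]].
    pose proof (dist_le x L t y Ht Ly). lra.
  - destruct (dist_exists x0 L HL) as [t Ht]. eauto.
  - exists s. split. exact Hs. apply (proj2 Hs). intros t [x [Kx Ht]].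
    destruct (Hr x Kx) as [y [Ly Hy]].
    pose proof (dist_le x L t y Ht Ly). lra.
Qed.

Lemma haus_le K L r : nonempty K -> nonempty L ->
  (forall x, K x -> exists y, L y /\ d x y <= r) ->
  (forall y, L y -> exists x, K x /\ d y x <= r) ->
  exists h, hausdorff_dist d K L h /\ h <= r.
Proof.
  intros HK HL H1 H2.
  destruct (excess_le K L r HK HL H1) as [s1 [E1 L1]].
  destruct (excess_le L K r HL HK H2) as [s2 [E2 L2]].
  exists (Rmax s1 s2). split. exists s1, s2; auto. apply Rmax_lub; auto.
Qed.
End H.
Section M.
Variable E : Type.
Variable d : E -> E -> R.
Hypothesis Hmet : is_metric d.

Lemma d_pos x y : 0 <= d x y. Proof. apply Hmet. Qed.
Lemma d_sym x y : d x y = d y x. Proof. apply Hmet. Qed.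
Lemma d_tri x y z : d x z <= d x y + d y z. Proof. apply Hmet. Qed.
Lemma d_refl x : d x x = 0. Proof. apply Hmet. reflexivity. Qed.
Lemma d_eq x y : d x y = 0 -> x = y. Proof. apply Hmet. Qed.

Lemma ball_open z r : open_set d (fun w => d z w < r).
Proof.
  intros x Hx. exists (r - d z x). split; [lra|].
  intros y Hy. pose proof (d_tri z x y). lra.
Qed.

Lemma compact_closed K : compact_set d K ->
  open_set d (fun x => ~ K x).
Proof.
  intros HK x Hx.
  destruct (HK E (fun z w => d z w < d x z / 2)) as [l Hl].
  - intros z. apply ball_open.
  - intros y Hy. exists y. rewrite d_refl.
    assert (d x y <> 0) by (intro H; apply d_eq in H; subst; tauto).
    pose proof (d_pos x y). lra.
  - set (r := fold_right (fun z acc => if Rlt_dec 0 (d x z) then Rmin (d x z / 2) acc else acc) 1 l).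
    assert (Hr : 0 < r /\ forall z, In z l -> 0 < d x z -> r <= d x z / 2).
    { unfold r; clear Hl r. induction l as [|a l IH]; simpl.
      - split; [lra| tauto].
      - destruct IH as [IH1 IH2]. destruct (Rlt_dec 0 (d x a)) as [Ha|Ha].
        + split. { apply Rmin_glb_lt; lra. }
          intros z [<-|Hz] Hz'. apply Rmin_l.
          eapply Rle_trans. apply Rmin_r. auto.
        + split; auto. intros z [<-|Hz] Hz'. tauto. auto. }
    destruct Hr as [Hr1 Hr2]. exists r. split; auto.
    intros y Hy Ky. destruct (Hl y Ky) as [z [Hz Hzy]].
    assert (0 < d x z) by (pose proof (d_pos z y); lra).
    specialize (Hr2 z Hz H). pose proof (d_tri x y z). rewrite (d_sym y z) in H0. lra.
Qed.

Variable Cn : nat -> E -> Prop.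
Variable C : E -> Prop.
Hypothesis Hcomp : forall n, compact_set d (Cn n).
Hypothesis Hne : forall n, nonempty (Cn n).
Hypothesis Hdec : forall n x, Cn (S n) x -> Cn n x.
Hypothesis HC : forall x, C x <-> forall n, Cn n x.

Lemma Cn_mono m n : (m <= n)%nat -> forall x, Cn n x -> Cn m x.
Proof. induction 1; auto. Qed.

Lemma approx eps : 0 < eps -> exists N, forall n, (N <= n)%nat ->
  forall x, Cn n x -> exists y, C y /\ d x y < eps.
Proof.
  intros Heps.
  destruct (Hcomp 0 (option nat)
    (fun i => match i with None => fun x => exists y, C y /\ d x y < eps
               | Some n => fun x => ~ Cn n x end)) as [l Hl].
  - intros [n|]. apply compact_closed; auto.
    intros x [y [Hy Hxy]]. exists (eps - d x y). split; [lra|].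
    intros z Hz. exists y. split; auto. pose proof (d_tri z x y). rewrite (d_sym z x) in H. lra.
  - intros x Hx. destruct (classic (exists n, ~ Cn n x)) as [[n Hn]|Hn].
    + exists (Some n); auto.
    + exists None. exists x. split. apply HC. intro n. apply NNPP. intro. apply Hn; eauto.
      rewrite d_refl; auto.
  - set (N := fold_right (fun i acc => match i with Some n => Nat.max n acc | None => acc end) 0%nat l).
    assert (HN : forall n, In (Some n) l -> (n <= N)%nat).
    { unfold N; clear. induction l as [|a l IH]; simpl. tauto.
      intros n [->|H]. lia. specialize (IH n H). destruct a; lia. }
    exists N. intros n Hn x Hx. destruct (Hl x (Cn_mono 0 n ltac:(lia) x Hx)) as [[m|] [Hi Hu]].
    + exfalso. apply Hu. apply (Cn_mono m n); auto. specialize (HN m Hi). lia.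
    + exact Hu.
Qed.

Lemma C_nonempty : nonempty C.
Proof.
  destruct (approx 1 ltac:(lra)) as [N HN]. destruct (Hne N) as [x Hx].
  destruct (HN N (le_n _) x Hx) as [y [Hy _]]. exists y; auto.
Qed.

Lemma C_compact : compact_set d C.
Proof.
  intros I U HU Hcov.
  destruct (Hcomp 0 (option I) (fun i => match i with None => fun x => ~ C x | Some i => U i end)) as [l Hl].
  - intros [i|]. auto. intros x Hx.
    assert (exists n, ~ Cn n x) as [n Hn].
    { apply NNPP. intro H. apply Hx. apply HC. intro n. apply NNPP. intro; eauto. }
    destruct (compact_closed _ (Hcomp n) x Hn) as [r [Hr Hb]]. exists r; split; auto.
    intros y Hy Cy. apply (Hb y Hy). apply HC; auto.
  - intros x Hx. destruct (classic (C x)) as [Cx|Cx].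
    + destruct (Hcov x Cx) as [i Hi]. exists (Some i); auto.
    + exists None; auto.
  - exists (fold_right (fun i acc => match i with Some j => j :: acc | None => acc end) nil l).
    intros x Cx. destruct (Hl x (proj1 (HC x) Cx 0%nat)) as [[i|] [Hi Hu]].
    + exists i. split; auto. clear -Hi. induction l as [|a l IH]; simpl in *. tauto.
      destruct Hi as [->|H]. left; auto. destruct a; [right|]; auto.
    + tauto.
Qed.
Lemma C_conv : hausdorff_converges d Cn C.
Proof.
  intros eps He. destruct (approx (eps/2) ltac:(lra)) as [N HN]. exists N. intros n Hn.
  destruct (haus_le E d d_pos (Cn n) C (eps/2) (Hne n) C_nonempty) as [h [Hh Hle]].
  - intros x Hx. destruct (HN n Hn x Hx) as [y [Cy Hy]]. exists y; split; auto; lra.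
  - intros y Cy. exists y. split. apply HC; auto. rewrite d_refl; lra.
  - exists h; split; auto; lra.
Qed.

Lemma all_in : nonempty C /\ compact_set d C /\ hausdorff_converges d Cn C.
Proof. split; [apply C_nonempty|split; [apply C_compact|apply C_conv]]. Qed.
End M.

Lemma cv_lb (u : nat -> R) l a : (forall n, a <= u n) -> Un_cv u l -> a <= l.
Proof.
  intros H Hc. apply (Rle_cv_lim (Un := fun _ => a) (Vn := u)); auto.
  intros eps He. exists 0%nat. intros n _. unfold Rdist. rewrite Rminus_diag, Rabs_R0. exact He.
Qed.

Theorem mainTheorem1 (E : Type) (d : E -> E -> R)
  (Hmet : is_metric d) (Hcomplete : complete d) :
  (* items 1 and 2 *)
  (forall An : nat -> E -> R,
     (forall n, compact_fuzzy_set d (An n)) ->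
     (forall alpha, 0 < alpha <= 1 -> forall n x,
        alpha_cut (An (S n)) alpha x -> alpha_cut (An n) alpha x) ->
     exists A : E -> R,
       compact_fuzzy_set d A /\
       (forall alpha, 0 < alpha <= 1 -> forall x,
          alpha_cut A alpha x <-> (forall n, alpha_cut (An n) alpha x)) /\
       levelwise_converges d An A /\
       (forall x, Un_cv (fun n => An n x) (A x)))
  /\
  (* item 3 *)
  (forall (An : nat -> E -> R) (A : E -> R),
     (forall n, compact_fuzzy_set d (An n)) ->
     compact_fuzzy_set d A ->
     (forall x, Un_decreasing (fun n => An n x) /\ Un_cv (fun n => An n x) (A x)) ->
     levelwise_converges d An A).
Proof.
  split.
  - intros An Hc Hcut.
    assert (Hb : forall n x, 0 <= An n x <= 1) by (intros n x; apply (Hc n)).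
    assert (Hdec : forall x, Un_decreasing (fun n => An n x)).
    { intros x n. destruct (Rle_dec (An (S n) x) 0) as [H|H].
      - pose proof (Hb n x); lra.
      - assert (alpha_cut (An n) (An (S n) x) x).
        { apply (Hcut (An (S n) x)). pose proof (Hb (S n) x); lra. unfold alpha_cut; lra. }
        unfold alpha_cut in H0; lra. }
    assert (Hlb : forall x, has_lb (fun n => An n x)).
    { intros x. exists 0. intros y [n ->]. unfold opp_seq. pose proof (Hb n x); lra. }
    set (A := fun x => proj1_sig (decreasing_cv _ (Hdec x) (Hlb x))).
    assert (HcvA : forall x, Un_cv (fun n => An n x) (A x)) by (intro x; exact (proj2_sig (decreasing_cv _ (Hdec x) (Hlb x)))).
    assert (Hchar : forall alpha, 0 < alpha <= 1 -> forall x,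
          alpha_cut A alpha x <-> (forall n, alpha_cut (An n) alpha x)).
    { intros a Ha x. unfold alpha_cut. split.
      - intros H n. pose proof (decreasing_ineq _ _ (Hdec x) (HcvA x) n). lra.
      - intros H. apply Rle_ge. apply (cv_lb _ _ _ (fun n => Rge_le _ _ (H n)) (HcvA x)). }
    assert (Hall : forall a, 0 < a <= 1 -> nonempty (alpha_cut A a) /\ compact_set d (alpha_cut A a) /\
        hausdorff_converges d (fun n => alpha_cut (An n) a) (alpha_cut A a)).
    { intros a Ha. apply (all_in E d Hmet).
      - intro n. apply (Hc n); auto.
      - intro n. apply (Hc n); auto.
      - intros n x. apply Hcut; auto.
      - apply Hchar; auto. }
    exists A. split; [|split; [exact Hchar|split; [|exact HcvA]]].
    + split; [split|].
      * intros x. split.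
        -- apply (cv_lb _ _ _ (fun n => proj1 (Hb n x)) (HcvA x)).
        -- pose proof (decreasing_ineq _ _ (Hdec x) (HcvA x) 0). pose proof (Hb 0%nat x). lra.
      * destruct (Hall 1 ltac:(lra)) as [[x0 Hx0] _]. exists x0. unfold alpha_cut in Hx0.
        pose proof (decreasing_ineq _ _ (Hdec x0) (HcvA x0) 0). pose proof (Hb 0%nat x0). lra.
      * intros a Ha. destruct (Hall a Ha) as [H1 [H2 _]]. auto.
    + intros a Ha. apply (Hall a Ha).
  - intros An A Hc HA Hx a Ha.
    apply (all_in E d Hmet).
    + intro n. apply (Hc n); auto.
    + intro n. apply (Hc n); auto.
    + intros n x. unfold alpha_cut. pose proof (proj1 (Hx x) n). simpl in H. lra.
    + intros x. unfold alpha_cut. split.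
      * intros H n. pose proof (decreasing_ineq _ _ (proj1 (Hx x)) (proj2 (Hx x)) n). lra.
      * intros H. apply Rle_ge. apply (cv_lb _ _ _ (fun n => Rge_le _ _ (H n)) (proj2 (Hx x))).
Qed.
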